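(* Let $M,K\ge 1$, $\mathcal K=\{1,\dots,K\}$, channels $\mathbf h_1,\dots,\mathbf h_K\in\mathbb C^{M}$, power budget $P>0$, weights $\mathbf u=(u_1,\dots,u_K)\in\mathbb R_{\ge 0}^K\setminus\{\mathbf 0\}$, $\mu\ge 0$, $P_c>0$ and rate thresholds $R_k^{th}\ge 0$ be given. For precoders $\mathbf p_c,\mathbf p_1,\dots,\mathbf p_K\in\mathbb C^M$ define $$\gamma_{c,k}=\frac{|\mathbf h_k^H\mathbf p_c|^2}{\sum_{j\in\mathcal K}|\mathbf h_k^H\mathbf p_j|^2+1},\qquad \gamma_{p,k}=\frac{|\mathbf h_k^H\mathbf p_k|^2}{\sum_{j\in\mathcal K\setminus\{k\}}|\mathbf h_k^H\mathbf p_j|^2+1},$$ and let $\Phi(\mathbf p,\mathbf c,\boldsymbol\gamma_p)=\dfrac{\sum_{k\in\mathcal K}u_k\big(C_k+\log(1+\gamma_{p,k})\big)}{\mu\big(\|\mathbf p_c\|^2+\sum_{k}\|\mathbf p_k\|^2\big)+P_c}$. Problem (A): maximize $\Phi$ over $\mathbf p_c,\mathbf p_1,\dots,\mathbf p_K$, $\mathbf c=(C_1,\dots,C_K)\in\mathbb R^K$, $\boldsymbol\gamma_c,\boldsymbol\gamma_p$ subject to: $\gamma_{c,k},\gamma_{p,k}$ given by the SINR formulas above; $\sum_{k'\in\mathcal K}C_{k'}\le\log(1+\gamma_{c,k})$ for all $k$; $C_k\ge\max\{0,R_k^{th}-\log(1+\gamma_{p,k})\}$ for all $k$; $\|\mathbf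 p_c\|^2+\sum_k\|\mathbf p_k\|^2\le P$. Problem (B): maximize $\Phi$ over $\mathbf p_c,\mathbf p_1,\dots,\mathbf p_K$, $\mathbf c\in\mathbb R^K$, $\boldsymbol\gamma_p\in\mathbb R_{\ge0}^K$, $s\ge 0$, $d_k\in\mathbb R$ and $e_k\in\mathbb C$ ($k=2,\dots,K$), subject to: (i) $\sqrt{\gamma_{p,k}}\big(\sum_{j\ne k}|\mathbf h_k^H\mathbf p_j|^2+1\big)^{1/2}\le \mathbf h_k^H\mathbf p_k$ for all $k$; (ii) $\sqrt{s}\big(\sum_{j\in\mathcal K}|\mathbf h_1^H\mathbf p_j|^2+1\big)^{1/2}\le\mathbf h_1^H\mathbf p_c$; (iii) $\sqrt{s}\big(\sum_{j\in\mathcal K}|\mathbf h_k^H\mathbf p_j|^2+1\big)^{1/2}\le d_k$ for all $k>1$; (iv) $d_k\le|e_k|$ for all $k>1$; (v) $\operatorname{Re}\{\mathbf h_k^H\mathbf p_k\}\ge 0$, $\operatorname{Im}\{\mathbf h_k^H\mathbf p_k\}=0$ for all $k$; (vi) $\operatorname{Re}\{\mathbf h_1^H\mathbf p_c\}\ge0$, $\operatorname{Im}\{\mathbf h_1^H\mathbf p_c\}=0$; (vii) $d_k\ge 0$ and $e_k=\mathbf h_k^H\mathbf p_c$ for all $k>1$; (viii) $\sum_{k}C_k\le\log(1+s)$; (ix) $C_k\ge\max\{0,R_k^{th}-\log(1+\gamma_{p,k})\}$ for all $k$, and $\|\mathbf p_c\|^2+\sum_k\|\mathbf p_k\|^2\le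 P$. (In (B), $\gamma_{p,k}$ is a free variable, not defined by the SINR formula.) Then problems (A) and (B) have the same optimal value, and for every optimal solution $(\mathbf p_c,\mathbf p_1,\dots,\mathbf p_K,\mathbf c,\boldsymbol\gamma_p,s,\mathbf d,\mathbf e)$ of (B), the precoders $(\mathbf p_c,\mathbf p_1,\dots,\mathbf p_K)$ together with $\mathbf c$ and the SINRs $\gamma_{c,k},\gamma_{p,k}$ computed from these precoders by the formulas above form an optimal solution of (A).
   Context: Rate-splitting downlink model: a base station with $M$ antennas serves $K$ single-antenna users with channels $\mathbf h_k$; $\mathbf p_c$ is the common-message precoder and $\mathbf p_k$ the private precoder of user $k$; $C_k$ is the portion of the common rate allocated to user $k$. Logarithms are base 2. Inequalities involving complex quantities such as $\mathbf h_k^H\mathbf p_k$ are meaningful because the constraints force these quantities to be real. *)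

(* Defs.v *)
From HB Require Import structures.
From mathcomp Require Import all_boot all_order all_algebra.
From mathcomp Require Import complex.
From mathcomp Require Import all_classical all_reals all_analysis.
Set Implicit Arguments. Unset Strict Implicit. Unset Printing Implicit Defensive.
Import Order.TTheory GRing.Theory Num.Theory.
Local Open Scope ring_scope.
Local Open Scope classical_set_scope.
Local Open Scope complex_scope.

Section RSMA.
Variable R : realType.

Definition log2 (x : R) : R := ln x / ln 2.

Definition cabs2 (z : R[i]) : R := (complex.Re z) ^+ 2 + (complex.Im z) ^+ 2.

Definition hdot (M : nat) (h p : 'I_M -> R[i]) : R[i] :=
  \sum_(i < M) (h i)^* * p i.

Definition sqnorm (M : nat) (p : 'I_M -> R[i]) : R :=
  \sum_(i < M) cabs2 (p i).

Variables (M K : nat) (h : 'I_K -> 'I_M -> R[i]).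

Definition totpow (pc : 'I_M -> R[i]) (p : 'I_K -> 'I_M -> R[i]) : R :=
  sqnorm pc + \sum_(k < K) sqnorm (p k).

Definition sinr_c (pc : 'I_M -> R[i]) (p : 'I_K -> 'I_M -> R[i]) (k : 'I_K) : R :=
  cabs2 (hdot (h k) pc) / (\sum_(j < K) cabs2 (hdot (h k) (p j)) + 1).

Definition sinr_p (p : 'I_K -> 'I_M -> R[i]) (k : 'I_K) : R :=
  cabs2 (hdot (h k) (p k)) / (\sum_(j < K | j != k) cabs2 (hdot (h k) (p j)) + 1).

Variables (P : R) (u : 'I_K -> R) (mu Pc : R) (Rth : 'I_K -> R).

Definition Phi (pc : 'I_M -> R[i]) (p : 'I_K -> 'I_M -> R[i])
    (c : 'I_K -> R) (gp : 'I_K -> R) : R :=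
  (\sum_(k < K) u k * (c k + log2 (1 + gp k))) / (mu * totpow pc p + Pc).

Definition feasA (pc : 'I_M -> R[i]) (p : 'I_K -> 'I_M -> R[i])
    (c gc gp : 'I_K -> R) : Prop :=
  [/\ (forall k, gc k = sinr_c pc p k),
      (forall k, gp k = sinr_p p k),
      (forall k, \sum_(k' < K) c k' <= log2 (1 + gc k)),
      (forall k, Num.max 0 (Rth k - log2 (1 + gp k)) <= c k)
    & totpow pc p <= P].

(* feasible set of problem (B); k1 is the first user (user 1).
   d k1 and e k1 are dummy (unconstrained, irrelevant) coordinates. *)
Definition feasB (k1 : 'I_K) (pc : 'I_M -> R[i]) (p : 'I_K -> 'I_M -> R[i])
    (c gp : 'I_K -> R) (s : R) (d : 'I_K -> R) (e : 'I_K -> R[i]) : Prop :=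
  (forall k, 0 <= gp k) /\ 0 <= s /\
  (forall k, Num.sqrt (gp k) *
     Num.sqrt (\sum_(j < K | j != k) cabs2 (hdot (h k) (p j)) + 1)
     <= complex.Re (hdot (h k) (p k))) /\
  Num.sqrt s * Num.sqrt (\sum_(j < K) cabs2 (hdot (h k1) (p j)) + 1)
     <= complex.Re (hdot (h k1) pc) /\
  (forall k, k != k1 ->
     Num.sqrt s * Num.sqrt (\sum_(j < K) cabs2 (hdot (h k) (p j)) + 1) <= d k) /\
  (forall k, k != k1 -> d k <= Num.sqrt (cabs2 (e k))) /\
  (forall k, 0 <= complex.Re (hdot (h k) (p k)) /\ complex.Im (hdot (h k) (p k)) = 0) /\
  (0 <= complex.Re (hdot (h k1) pc) /\ complex.Im (hdot (h k1) pc) = 0) /\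
  (forall k, k != k1 -> 0 <= d k /\ e k = hdot (h k) pc) /\
  \sum_(k < K) c k <= log2 (1 + s) /\
  (forall k, Num.max 0 (Rth k - log2 (1 + gp k)) <= c k) /\
  totpow pc p <= P.

Local Open Scope ereal_scope.

Definition optvalA : \bar R :=
  ereal_sup [set r | exists pc p c gc gp,
    feasA pc p c gc gp /\ r = (Phi pc p c gp)%:E].

Definition optvalB (k1 : 'I_K) : \bar R :=
  ereal_sup [set r | exists pc p c gp s d e,
    feasB k1 pc p c gp s d e /\ r = (Phi pc p c gp)%:E].

Local Close Scope ereal_scope.

Definition optA pc p c gc gp : Prop :=
  feasA pc p c gc gp /\
  forall pc' p' c' gc' gp', feasA pc' p' c' gc' gp' ->
    Phi pc' p' c' gp' <= Phi pc p c gp.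

Definition optB k1 pc p c gp s d e : Prop :=
  feasB k1 pc p c gp s d e /\
  forall pc' p' c' gp' s' d' e', feasB k1 pc' p' c' gp' s' d' e' ->
    Phi pc' p' c' gp' <= Phi pc p c gp.

End RSMA.

(* Main.v *)
Require Import Defs.
From HB Require Import structures.
From mathcomp Require Import all_boot all_order all_algebra.
From mathcomp Require Import complex.
From mathcomp Require Import all_classical all_reals all_analysis.
From mathcomp Require Import ring lra.
Import Order.TTheory GRing.Theory Num.Theory.
Set Implicit Arguments. Unset Strict Implicit. Unset Printing Implicit Defensive.
Local Open Scope ring_scope.

Section Helpers.
Variable R : realType.

Lemma cabs2M (x y : R[i]) : cabs2 (x * y) = cabs2 x * cabs2 y.
Proof. case: x => a b; case: y => c d. rewrite /cabs2 /=. ring. Qed.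

Lemma cabs2_ge0 (z : R[i]) : 0 <= cabs2 z.
Proof. by rewrite /cabs2 addr_ge0 // sqr_ge0. Qed.

Lemma log2_le (x y : R) : 0 < x -> x <= y -> log2 x <= log2 y.
Proof.
move=> x0 xy; rewrite /log2 ler_wpM2r //.
  by rewrite invr_ge0 ltW // ln_gt0 // ltr1n.
by rewrite ler_ln // ?posrE // (lt_le_trans x0 xy).
Qed.

Definition rot (z : R[i]) : R[i] :=
  let n := Num.sqrt (cabs2 z) in
  if n == 0 then 1 else Complex (complex.Re z / n) (- complex.Im z / n).

Lemma rot_abs z : cabs2 (rot z) = 1.
Proof.
rewrite /rot; case: ifP => [_|]; first by rewrite /cabs2 /= expr0n /= addr0 expr1n.
case: z => a b /= hn.
have n2 : Num.sqrt (a ^+ 2 + b ^+ 2) ^+ 2 = a ^+ 2 + b ^+ 2.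
  by rewrite sqr_sqrtr // addr_ge0 // sqr_ge0.
move: hn; rewrite /cabs2 /= => hn.
rewrite !expr_div_n sqrrN -mulrDl -[X in X / _]n2 divff // expf_neq0 //.
by rewrite hn.
Qed.

Lemma rot_align z : complex.Re (rot z * z) = Num.sqrt (cabs2 z)
                 /\ complex.Im (rot z * z) = 0.
Proof.
rewrite /rot; case: ifP => [/eqP hn|].
  move: hn => /eqP; rewrite sqrtr_eq0 => hle.
  have h0 : cabs2 z = 0 by apply/le_anti; rewrite hle cabs2_ge0.
  move: h0 hle; case: z => a b; rewrite /cabs2 /= => h0 _.
  have ha : a ^+ 2 = 0 by apply/le_anti; rewrite sqr_ge0 -h0 lerDl sqr_ge0.
  have hb : b ^+ 2 = 0 by move: h0; rewrite ha add0r.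
  move: ha hb => /eqP; rewrite expf_eq0 /= => /eqP -> /eqP; rewrite expf_eq0 /= => /eqP ->.
  by rewrite !mul1r !mul0r !subr0 !addr0 expr0n /= addr0 sqrtr0.
case: z => a b /=; rewrite /cabs2 /= => /negbT hn.
have n2 : Num.sqrt (a ^+ 2 + b ^+ 2) ^+ 2 = a ^+ 2 + b ^+ 2.
  by rewrite sqr_sqrtr // addr_ge0 // sqr_ge0.
set n := Num.sqrt _ in hn n2 *.
split; last by field.
apply: (mulIf hn). rewrite -[RHS]expr2 n2. field. exact: hn.
Qed.


Variables (M K : nat) (h : 'I_K -> 'I_M -> R[i]).

Definition rotv (w : R[i]) (q : 'I_M -> R[i]) : 'I_M -> R[i] := fun i => w * q i.

Lemma hdot_rot (hh : 'I_M -> R[i]) w q : hdot hh (rotv w q) = w * hdot hh q.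
Proof. rewrite /hdot big_distrr; apply: eq_bigr => i _; by rewrite /rotv mulrCA. Qed.

Lemma cabs2_hdot_rot hh w q : cabs2 w = 1 -> cabs2 (hdot hh (rotv w q)) = cabs2 (hdot hh q).
Proof. by move=> hw; rewrite hdot_rot cabs2M hw mul1r. Qed.

Lemma sqnorm_rot w q : cabs2 w = 1 -> sqnorm (rotv w q) = sqnorm q.
Proof. move=> hw; rewrite /sqnorm; apply: eq_bigr => i _; by rewrite /rotv cabs2M hw mul1r. Qed.

Lemma sqnorm_ge0 (q : 'I_M -> R[i]) : 0 <= sqnorm q.
Proof. by apply: sumr_ge0 => i _; apply: cabs2_ge0. Qed.

Lemma totpow_ge0 pc (p : 'I_K -> 'I_M -> R[i]) : 0 <= totpow pc p.
Proof. by rewrite /totpow addr_ge0 ?sqnorm_ge0 // sumr_ge0 // => k _; apply: sqnorm_ge0. Qed.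

End Helpers.

Section Main.
Variables (R : realType) (M K : nat) (h : 'I_K -> 'I_M -> R[i]).

Lemma sqrt_div (a D : R) : 0 < D -> 0 <= a -> Num.sqrt (a / D) * Num.sqrt D = Num.sqrt a.
Proof.
move=> D0 a0; rewrite -sqrtrM; last by rewrite divr_ge0 // ltW.
by rewrite divfK // lt0r_neq0.
Qed.

Lemma sqrt_le_div (s a D : R) : 0 < D -> 0 <= a -> s <= a / D ->
  Num.sqrt s * Num.sqrt D <= Num.sqrt a.
Proof.
move=> D0 a0 sa; rewrite -(sqrt_div D0 a0) ler_wpM2r ?sqrtr_ge0 //; exact: ler_wsqrtr.
Qed.

Lemma le_div_sqrt (s a D : R) : 0 < D -> 0 <= s -> 0 <= a ->
  Num.sqrt s * Num.sqrt D <= Num.sqrt a -> s <= a / D.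
Proof.
move=> D0 s0 a0; rewrite -sqrtrM // ler_sqrt // => H.
by rewrite ler_pdivlMr.
Qed.

Lemma re_sqrt (z : R[i]) : 0 <= complex.Re z -> complex.Im z = 0 ->
  complex.Re z = Num.sqrt (cabs2 z).
Proof.
move=> r0 i0; rewrite /cabs2 i0 expr0n /= addr0 sqrtr_sqr ger0_norm //.
Qed.

Lemma den_pos (q : 'I_K -> R) (P : pred 'I_K) : (forall j, 0 <= q j) -> 0 < \sum_(j < K | P j) q j + 1.
Proof. move=> hq; apply: (lt_le_trans ltr01); rewrite lerDr sumr_ge0 //. Qed.

Lemma rotate_sol (k1 : 'I_K) pc (p : 'I_K -> 'I_M -> R[i]) : exists pc' p',
  (forall k j, cabs2 (hdot (h k) (p' j)) = cabs2 (hdot (h k) (p j))) /\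
  (forall k, cabs2 (hdot (h k) pc') = cabs2 (hdot (h k) pc)) /\
  totpow pc' p' = totpow pc p /\
  (forall k, complex.Re (hdot (h k) (p' k)) = Num.sqrt (cabs2 (hdot (h k) (p k)))
          /\ complex.Im (hdot (h k) (p' k)) = 0) /\
  (complex.Re (hdot (h k1) pc') = Num.sqrt (cabs2 (hdot (h k1) pc))
          /\ complex.Im (hdot (h k1) pc') = 0).
Proof.
exists (rotv (rot (hdot (h k1) pc)) pc).
exists (fun k => rotv (rot (hdot (h k) (p k))) (p k)).
split; first by move=> k j; rewrite cabs2_hdot_rot // rot_abs.
split; first by move=> k; rewrite cabs2_hdot_rot // rot_abs.
split.
  rewrite /totpow sqnorm_rot ?rot_abs //; congr (_ + _).
  by apply: eq_bigr => k _; rewrite sqnorm_rot // rot_abs.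
split; first by move=> k; rewrite hdot_rot; exact: rot_align.
by rewrite hdot_rot; exact: rot_align.
Qed.

End Main.

Section Main2.
Variables (R : realType) (M K : nat) (h : 'I_K -> 'I_M -> R[i]).
Variables (P : R) (u : 'I_K -> R) (mu Pc : R) (Rth : 'I_K -> R).
Hypotheses (hu : forall k, 0 <= u k) (hmu : 0 <= mu) (hPc : 0 < Pc).

Lemma Phi_mono (pc : 'I_M -> R[i]) (p : 'I_K -> 'I_M -> R[i]) c (gp gp' : 'I_K -> R) : (forall k, 0 <= gp k) ->
  (forall k, gp k <= gp' k) -> Phi u mu Pc pc p c gp <= Phi u mu Pc pc p c gp'.
Proof.
move=> g0 gg; rewrite /Phi ler_wpM2r //.
  by rewrite invr_ge0 addr_ge0 ?mulr_ge0 ?totpow_ge0 // ltW.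
apply: ler_sum => k _; rewrite ler_wpM2l // lerD2l log2_le //.
  by rewrite (lt_le_trans ltr01) // lerDl.
by rewrite lerD2l.
Qed.

Lemma sinr_p_ge0 (p : 'I_K -> 'I_M -> R[i]) k : 0 <= sinr_p h p k.
Proof. by rewrite /sinr_p divr_ge0 ?cabs2_ge0 // ltW // den_pos // => j; apply: cabs2_ge0. Qed.

Lemma sinr_c_ge0 pc (p : 'I_K -> 'I_M -> R[i]) k : 0 <= sinr_c h pc p k.
Proof. by rewrite /sinr_c divr_ge0 ?cabs2_ge0 // ltW // den_pos // => j; apply: cabs2_ge0. Qed.

Lemma BtoA k1 pc p c gp s d e : feasB h P Rth k1 pc p c gp s d e ->
  feasA h P Rth pc p c (sinr_c h pc p) (sinr_p h p) /\ (forall k, gp k <= sinr_p h p k).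
Proof.
move=> [g0 [s0 [hi [hii [hiii [hiv [hv [hvi [hvii [hviii [hix hP]]]]]]]]]]].
have hgp : forall k, gp k <= sinr_p h p k.
  move=> k; rewrite /sinr_p; apply: le_div_sqrt => //.
  - by apply: den_pos => j; apply: cabs2_ge0.
  - exact: cabs2_ge0.
  - case: (hv k) => r0 i0; rewrite -re_sqrt //; exact: hi.
have hs : forall k, s <= sinr_c h pc p k.
  move=> k; rewrite /sinr_c; apply: le_div_sqrt => //.
  - by apply: den_pos => j; apply: cabs2_ge0.
  - exact: cabs2_ge0.
  case: (eqVneq k k1) => [->|kk1].
    case: hvi => r0 i0; rewrite -re_sqrt //.
  case: (hvii k kk1) => d0 ek; rewrite -ek.
  exact: (le_trans (hiii k kk1) (hiv k kk1)).
split=> //; split=> //.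
- move=> k; apply: (le_trans hviii); apply: log2_le.
    by rewrite (lt_le_trans ltr01) // lerDl.
  by rewrite lerD2l.
- move=> k; apply: le_trans (hix k); rewrite ge_max le_max lexx /=.
  rewrite le_max; apply/orP; right; rewrite lerD2l lerN2; apply: log2_le; last by rewrite lerD2l.
  by rewrite (lt_le_trans ltr01) // lerDl.
Qed.

Lemma AtoB k1 pc p c gc gp : feasA h P Rth pc p c gc gp ->
  exists pc' p' s d e, feasB h P Rth k1 pc' p' c gp s d e /\
     Phi u mu Pc pc' p' c gp = Phi u mu Pc pc p c gp.
Proof.
move=> [hgc hgp hsum hmax hP].
have [pc' [p' [Hp [Hpc [Ht [Hv Hvi]]]]]] := rotate_sol h k1 pc p.
have HD : forall k, \sum_(j < K) cabs2 (hdot (h k) (p' j)) = \sum_(j < K) cabs2 (hdot (h k) (p j)).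
  by move=> k; apply: eq_bigr => j _; rewrite Hp.
have HDp : forall k, \sum_(j < K | j != k) cabs2 (hdot (h k) (p' j))
   = \sum_(j < K | j != k) cabs2 (hdot (h k) (p j)).
  by move=> k; apply: eq_bigr => j _; rewrite Hp.
pose s := \big[Order.min/gc k1]_(k < K) gc k.
have [s0 ssum] : 0 <= s /\ \sum_(k' < K) c k' <= log2 (1 + s).
  rewrite /s; apply: (big_ind (fun x => 0 <= x /\ \sum_(k' < K) c k' <= log2 (1 + x))).
  - by split; [rewrite hgc; exact: sinr_c_ge0 | exact: hsum].
  - by move=> x y hx hy; rewrite minElt; case: ifP.
  - by move=> k _; split; [rewrite hgc; exact: sinr_c_ge0 | exact: hsum].
have sle : forall k, s <= gc k.
  by move=> k; rewrite /s (bigD1 k) //= ge_min lexx.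
pose d := fun k : 'I_K => Num.sqrt s * Num.sqrt (\sum_(j < K) cabs2 (hdot (h k) (p' j)) + 1).
exists pc', p', s, d, (fun k => hdot (h k) pc').
split; last by rewrite /Phi Ht.
have Dpos : forall k, 0 < \sum_(j < K) cabs2 (hdot (h k) (p j)) + 1.
  by move=> k; apply: den_pos => j; apply: cabs2_ge0.
split; first by move=> k; rewrite hgp sinr_p_ge0.
split=> //.
split.
  move=> k; rewrite HDp hgp /sinr_p sqrt_div ?cabs2_ge0 //; first by case: (Hv k) => -> _.
  by apply: den_pos => j; apply: cabs2_ge0.
split.
  case: Hvi => -> _; rewrite HD; apply: sqrt_le_div => //; first exact: cabs2_ge0.
  by rewrite -/(sinr_c h pc p k1) -hgc.
split; first by move=> k _; rewrite /d.
split.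
  move=> k _; rewrite /d HD Hpc; apply: sqrt_le_div => //; first exact: cabs2_ge0.
  by rewrite -/(sinr_c h pc p k) -hgc.
split.
  by move=> k; case: (Hv k) => -> ->; rewrite sqrtr_ge0.
split; first by case: Hvi => -> ->; rewrite sqrtr_ge0.
split; first by move=> k _; rewrite /d mulr_ge0 ?sqrtr_ge0.
split=> //.
split=> //.
by rewrite Ht.
Qed.

End Main2.

Theorem proposition1 (R : realType) (M K : nat) (hM : (0 < M)%N) (hK : (0 < K)%N)
  (h : 'I_K -> 'I_M -> R[i]) (P : R) (u : 'I_K -> R) (mu Pc : R)
  (Rth : 'I_K -> R)
  (hP : 0 < P) (hu : forall k, 0 <= u k) (hu0 : exists k, u k != 0)
  (hmu : 0 <= mu) (hPc : 0 < Pc) (hRth : forall k, 0 <= Rth k) :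
  let k1 : 'I_K := Ordinal hK in
  optvalA h P u mu Pc Rth = optvalB h P u mu Pc Rth k1 /\
  (forall pc p c gp s d e,
     optB h P u mu Pc Rth k1 pc p c gp s d e ->
     optA h P u mu Pc Rth pc p c (sinr_c h pc p) (sinr_p h p)).
Proof.
move=> k1; split.
  rewrite /optvalA /optvalB; apply/eqP; rewrite eq_le; apply/andP; split.
    apply: le_ereal_sup => r [pc [p [c [gc [gp [hA ->]]]]]].
    have [pc' [p' [s [d [e [hB hE]]]]]] := AtoB u mu Pc k1 hA.
    by exists pc', p', c, gp, s, d, e; split => //; rewrite hE.
  apply: ge_ereal_sup => r [pc [p [c [gp [s [d [e [hB ->]]]]]]]].
  have [hA hle] := BtoA hB.
  apply: (@le_trans _ _ (Phi u mu Pc pc p c (sinr_p h p))%:E).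
    by rewrite lee_fin; apply: Phi_mono => //; case: hB.
  apply: ereal_sup_ubound.
  by exists pc, p, c, (sinr_c h pc p), (sinr_p h p); split.
move=> pc p c gp s d e [hB hopt].
have [hA hle] := BtoA hB.
split=> // pc' p' c' gc' gp' hA'.
have [pc'' [p'' [s' [d' [e' [hB' hE]]]]]] := AtoB u mu Pc k1 hA'.
rewrite -hE; apply: le_trans (hopt _ _ _ _ _ _ _ hB') _.
by apply: Phi_mono => //; case: hB.
Qed.
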